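(* Let $\rho(t)$ solve the Lindblad equation $\frac{d}{dt}\rho=[-iH(t),\rho]+\mathcal{L}_D(\rho)$ and suppose $\rho(t)=\sum_{j=1}^n\lambda_j(t)\pi_j(t)$ where $\Lambda(t)=(\lambda_1(t),\dots,\lambda_n(t))$ is differentiable and $\pi(t)=(\pi_1(t),\dots,\pi_n(t))$ is a differentiable complete flag. Then $$\frac{d}{dt}\Lambda(t)=\Omega^{\pi(t)}\Lambda(t).$$ This holds also at sharp eigenvalue crossings.
   Context: Dissipator: $\mathcal{L}_D(\rho)=\sum_{k=1}^N\big(L_k\rho L_k^\dagger-\tfrac12\{L_k^\dagger L_k,\rho\}\big)$ for fixed $n\times n$ complex matrices $L_1,\dots,L_N$, $H(t)$ Hermitian. A complete flag $\pi=(\pi_1,\dots,\pi_n)$ is an $n$-tuple of rank-one orthogonal projectors on $\mathbb{C}^n$ with $\pi_i\pi_j=\delta_{ij}\pi_i$ and $\sum_j\pi_j=I$. For a complete flag define $w^\pi_{ij}=\sum_{k=1}^N\mathrm{Tr}(\pi_iL_k\pi_jL_k^\dagger)$ and the $n\times n$ matrix $\Omega^\pi$ by $\Omega^\pi_{ij}=w^\pi_{ij}$ for $i\neq j$ and $\Omega^\pi_{jj}=-\sum_{l\neq j}w^\pi_{lj}$. A sharp eigenvalue crossing is an isolated time where some $\lambda_j$ coincide and all crossing eigenvalues have pairwise different derivatives. *)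

(* Defs.v *)
(* classical reals, derivatives from Stdlib Reals.
   Complex numbers are encoded as pairs (Re, Im) of reals; n x n complex
   matrices as functions nat -> nat -> C, only indices < n being relevant. *)
From Stdlib Require Import Reals.
Open Scope R_scope.

Definition C : Type := (R * R)%type.
Definition Re (z : C) : R := fst z.
Definition Im (z : C) : R := snd z.
Definition C0 : C := (0, 0).
Definition C1 : C := (1, 0).
Definition Ci : C := (0, 1).
Definition RtoC (r : R) : C := (r, 0).
Definition Cplus (a b : C) : C := (Re a + Re b, Im a + Im b).
Definition Copp (a : C) : C := (- Re a, - Im a).
Definition Cminus (a b : C) : C := Cplus a (Copp b).
Definition Cmult (a b : C) : C :=
  (Re a * Re b - Im a * Im b, Re a * Im b + Im a * Re b).
Definition Cconj (a : C) : C := (Re a, - Im a).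

Fixpoint csum (n : nat) (f : nat -> C) : C :=
  match n with
  | O => C0
  | S m => Cplus (csum m f) (f m)
  end.

Definition Mat : Type := nat -> nat -> C.
Definition mzero : Mat := fun _ _ => C0.
Definition idm : Mat := fun i j => if Nat.eqb i j then C1 else C0.
Definition madd (A B : Mat) : Mat := fun i j => Cplus (A i j) (B i j).
Definition msub (A B : Mat) : Mat := fun i j => Cminus (A i j) (B i j).
Definition mscale (c : C) (A : Mat) : Mat := fun i j => Cmult c (A i j).
Definition mmul (n : nat) (A B : Mat) : Mat :=
  fun i j => csum n (fun k => Cmult (A i k) (B k j)).
Definition adj (A : Mat) : Mat := fun i j => Cconj (A j i).
Definition trace (n : nat) (A : Mat) : C := csum n (fun i => A i i).
Definition msum (m : nat) (F : nat -> Mat) : Mat :=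
  fun a b => csum m (fun k => F k a b).

Definition meq (n : nat) (A B : Mat) : Prop :=
  forall i j, (i < n)%nat -> (j < n)%nat -> A i j = B i j.

Definition hermitian (n : nat) (A : Mat) : Prop := meq n (adj A) A.

Definition rank_one (n : nat) (P : Mat) : Prop :=
  exists u w : nat -> C,
    (exists i, (i < n)%nat /\ u i <> C0) /\
    (exists i, (i < n)%nat /\ w i <> C0) /\
    meq n P (fun i j => Cmult (u i) (Cconj (w j))).

Definition complete_flag (n : nat) (pi : nat -> Mat) : Prop :=
  (forall j, (j < n)%nat -> rank_one n (pi j) /\ hermitian n (pi j)) /\
  (forall i j, (i < n)%nat -> (j < n)%nat ->
     meq n (mmul n (pi i) (pi j)) (if Nat.eqb i j then pi i else mzero)) /\
  meq n (msum n pi) idm.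

Definition dissipator (n N : nat) (Ls : nat -> Mat) (rho : Mat) : Mat :=
  msum N (fun k =>
    msub (mmul n (mmul n (Ls k) rho) (adj (Ls k)))
         (mscale (RtoC (/ 2))
            (madd (mmul n (mmul n (adj (Ls k)) (Ls k)) rho)
                  (mmul n rho (mmul n (adj (Ls k)) (Ls k)))))).

Definition lindblad_rhs (n : nat) (H : Mat) (N : nat) (Ls : nat -> Mat)
  (rho : Mat) : Mat :=
  madd (msub (mmul n (mscale (Copp Ci) H) rho) (mmul n rho (mscale (Copp Ci) H)))
       (dissipator n N Ls rho).

Definition wpi (n N : nat) (Ls : nat -> Mat) (pi : nat -> Mat) (i j : nat) : C :=
  csum N (fun k => trace n (mmul n (mmul n (mmul n (pi i) (Ls k)) (pi j)) (adj (Ls k)))).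

Definition Omega (n N : nat) (Ls : nat -> Mat) (pi : nat -> Mat) (i j : nat) : C :=
  if Nat.eqb i j
  then Copp (csum n (fun l => if Nat.eqb l j then C0 else wpi n N Ls pi l j))
  else wpi n N Ls pi i j.

Definition mat_has_deriv (n : nat) (f : R -> Mat) (t : R) (D : Mat) : Prop :=
  forall i j, (i < n)%nat -> (j < n)%nat ->
    derivable_pt_lim (fun s => Re (f s i j)) t (Re (D i j)) /\
    derivable_pt_lim (fun s => Im (f s i j)) t (Im (D i j)).

Definition mat_derivable (n : nat) (f : R -> Mat) (t : R) : Prop :=
  exists D, mat_has_deriv n f t D.

(* Main.v *)
Require Import Defs.
From Stdlib Require Import Reals.
Open Scope R_scope.
From Stdlib Require Import Lra Lia Setoid Morphisms Ring FunctionalExtensionality.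
Import Defs.

Lemma C_ring : ring_theory C0 C1 Cplus Cmult Cminus Copp (@eq C).
Proof.
  constructor; intros; repeat match goal with x : C |- _ => destruct x end;
  unfold Cminus, Cplus, Cmult, Copp, C0, C1, Re, Im; simpl; f_equal; ring.
Qed.
Add Ring Cring : C_ring.

Lemma csum_ext n f g : (forall k, (k < n)%nat -> f k = g k) -> csum n f = csum n g.
Proof. induction n; simpl; intros; auto. rewrite IHn, H; auto. Qed.

Lemma csum_plus n f g : csum n (fun k => Cplus (f k) (g k)) = Cplus (csum n f) (csum n g).
Proof. induction n; simpl. unfold C0, Cplus; simpl; f_equal; ring. rewrite IHn; ring. Qed.

Lemma csum_zero n : csum n (fun _ => C0) = C0.
Proof. induction n; simpl; auto. rewrite IHn; ring. Qed.

Lemma csum_mult_l n c f : Cmult c (csum n f) = csum n (fun k => Cmult c (f k)).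
Proof. induction n; simpl. unfold C0, Cmult; simpl; f_equal; ring. rewrite <- IHn; ring. Qed.

Lemma csum_mult_r n c f : Cmult (csum n f) c = csum n (fun k => Cmult (f k) c).
Proof. induction n; simpl. unfold C0, Cmult; simpl; f_equal; ring. rewrite <- IHn; ring. Qed.

Lemma csum_opp n f : Copp (csum n f) = csum n (fun k => Copp (f k)).
Proof. induction n; simpl. unfold C0, Copp; simpl; f_equal; ring. rewrite <- IHn; ring. Qed.

Lemma csum_swap n m F : csum n (fun i => csum m (fun k => F i k)) = csum m (fun k => csum n (fun i => F i k)).
Proof. induction n; simpl. rewrite csum_zero; auto. rewrite IHn, <- csum_plus; auto. Qed.

Lemma csum_if n j a b : (j < n)%nat ->
  csum n (fun m => if Nat.eqb j m then a m else b m) = Cplus (csum n b) (Cminus (a j) (b j)).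
Proof.
  induction n; intros Hj; [lia|]. simpl.
  destruct (Nat.eq_dec j n).
  - subst. rewrite Nat.eqb_refl.
    rewrite (csum_ext n _ b). ring.
    intros k Hk. destruct (Nat.eqb_spec n k); [lia|auto].
  - rewrite IHn by lia. destruct (Nat.eqb_spec j n); [lia|]. ring.
Qed.

Instance meq_equiv n : Equivalence (meq n).
Proof. constructor; unfold meq.
  - intros A i j; auto.
  - intros A B H i j Hi Hj; symmetry; auto.
  - intros A B D H1 H2 i j Hi Hj; rewrite H1; auto. Qed.

Instance mmul_proper n : Proper (meq n ==> meq n ==> meq n) (mmul n).
Proof. intros A A' HA B B' HB i j Hi Hj. unfold mmul. apply csum_ext; intros k Hk. rewrite HA, HB; auto. Qed.
Instance madd_proper n : Proper (meq n ==> meq n ==> meq n) madd.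
Proof. intros A A' HA B B' HB i j Hi Hj. unfold madd. rewrite HA, HB; auto. Qed.
Instance msub_proper n : Proper (meq n ==> meq n ==> meq n) msub.
Proof. intros A A' HA B B' HB i j Hi Hj. unfold msub. rewrite HA, HB; auto. Qed.
Instance mscale_proper n c : Proper (meq n ==> meq n) (mscale c).
Proof. intros A A' HA i j Hi Hj. unfold mscale. rewrite HA; auto. Qed.
Instance adj_proper n : Proper (meq n ==> meq n) adj.
Proof. intros A A' HA i j Hi Hj. unfold adj. rewrite HA; auto. Qed.
Instance trace_proper n : Proper (meq n ==> eq) (trace n).
Proof. intros A A' HA. unfold trace. apply csum_ext; intros; apply HA; auto. Qed.

Lemma msum_ext n m F G : (forall k, (k < m)%nat -> meq n (F k) (G k)) -> meq n (msum m F) (msum m G).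
Proof. intros H i j Hi Hj. unfold msum. apply csum_ext; intros; apply H; auto. Qed.

Lemma mmul_assoc n A B D : meq n (mmul n (mmul n A B) D) (mmul n A (mmul n B D)).
Proof.
  intros i j _ _. unfold mmul.
  transitivity (csum n (fun k => csum n (fun l => Cmult (A i l) (Cmult (B l k) (D k j))))).
  - apply csum_ext; intros. rewrite csum_mult_r. apply csum_ext; intros. ring.
  - rewrite csum_swap. apply csum_ext; intros. rewrite csum_mult_l. auto.
Qed.

Lemma mmul_madd_l n A B D : meq n (mmul n (madd A B) D) (madd (mmul n A D) (mmul n B D)).
Proof. intros i j _ _. unfold mmul, madd. rewrite <- csum_plus. apply csum_ext; intros; ring. Qed.
Lemma mmul_madd_r n A B D : meq n (mmul n D (madd A B)) (madd (mmul n D A) (mmul n D B)).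
Proof. intros i j _ _. unfold mmul, madd. rewrite <- csum_plus. apply csum_ext; intros; ring. Qed.
Lemma mmul_msub_l n A B D : meq n (mmul n (msub A B) D) (msub (mmul n A D) (mmul n B D)).
Proof. intros i j _ _. unfold mmul, msub. unfold Cminus at 2. rewrite csum_opp, <- csum_plus. apply csum_ext; intros; ring. Qed.
Lemma mmul_msub_r n A B D : meq n (mmul n D (msub A B)) (msub (mmul n D A) (mmul n D B)).
Proof. intros i j _ _. unfold mmul, msub. unfold Cminus at 2. rewrite csum_opp, <- csum_plus. apply csum_ext; intros; ring. Qed.
Lemma mmul_mscale_l n c A B : meq n (mmul n (mscale c A) B) (mscale c (mmul n A B)).
Proof. intros i j _ _. unfold mmul, mscale. rewrite csum_mult_l. apply csum_ext; intros; ring. Qed.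
Lemma mmul_mscale_r n c A B : meq n (mmul n A (mscale c B)) (mscale c (mmul n A B)).
Proof. intros i j _ _. unfold mmul, mscale. rewrite csum_mult_l. apply csum_ext; intros; ring. Qed.
Lemma mmul_msum_l n m F B : meq n (mmul n (msum m F) B) (msum m (fun k => mmul n (F k) B)).
Proof. intros i j _ _. unfold mmul, msum. rewrite csum_swap. apply csum_ext; intros. rewrite csum_mult_r. auto. Qed.
Lemma mmul_msum_r n m F B : meq n (mmul n B (msum m F)) (msum m (fun k => mmul n B (F k))).
Proof. intros i j _ _. unfold mmul, msum. rewrite csum_swap. apply csum_ext; intros. rewrite csum_mult_l. auto. Qed.
Lemma mmul_idm_l n A : meq n (mmul n idm A) A.
Proof.
  intros i j Hi _. unfold mmul, idm.
  transitivity (csum n (fun k => if Nat.eqb i k then A k j else C0)).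
  - apply csum_ext; intros. destruct (Nat.eqb i k); ring.
  - rewrite csum_if by auto. rewrite csum_zero. ring.
Qed.

Lemma trace_madd n A B : trace n (madd A B) = Cplus (trace n A) (trace n B).
Proof. unfold trace, madd. apply csum_plus. Qed.
Lemma trace_msub n A B : trace n (msub A B) = Cminus (trace n A) (trace n B).
Proof. unfold trace, msub. unfold Cminus at 2. rewrite csum_opp, <- csum_plus. auto. Qed.
Lemma trace_mscale n c A : trace n (mscale c A) = Cmult c (trace n A).
Proof. unfold trace, mscale. rewrite csum_mult_l. auto. Qed.
Lemma trace_msum n m F : trace n (msum m F) = csum m (fun k => trace n (F k)).
Proof. unfold trace, msum. apply csum_swap. Qed.
Lemma trace_cyc n A B : trace n (mmul n A B) = trace n (mmul n B A).
Proof. unfold trace, mmul. rewrite csum_swap. apply csum_ext; intros. apply csum_ext; intros. ring. Qed.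

Definition cd (f : R -> C) (t : R) (d : C) : Prop :=
  derivable_pt_lim (fun s => Re (f s)) t (Re d) /\ derivable_pt_lim (fun s => Im (f s)) t (Im d).

Lemma dpl_eq f t l l' : derivable_pt_lim f t l -> l = l' -> derivable_pt_lim f t l'.
Proof. intros; subst; auto. Qed.

Lemma cd_plus f g t a b : cd f t a -> cd g t b -> cd (fun s => Cplus (f s) (g s)) t (Cplus a b).
Proof.
  intros [Ha1 Ha2] [Hb1 Hb2]. split; unfold Cplus, Re, Im in *; simpl.
  - apply (derivable_pt_lim_plus _ _ _ _ _ Ha1 Hb1).
  - apply (derivable_pt_lim_plus _ _ _ _ _ Ha2 Hb2).
Qed.

Lemma cd_mult f g t a b : cd f t a -> cd g t b ->
  cd (fun s => Cmult (f s) (g s)) t (Cplus (Cmult a (g t)) (Cmult (f t) b)).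
Proof.
  intros [Ha1 Ha2] [Hb1 Hb2]. split; unfold Cplus, Cmult, Re, Im in *; simpl.
  - eapply dpl_eq. apply (derivable_pt_lim_minus _ _ _ _ _
      (derivable_pt_lim_mult _ _ _ _ _ Ha1 Hb1) (derivable_pt_lim_mult _ _ _ _ _ Ha2 Hb2)).
    ring.
  - eapply dpl_eq. apply (derivable_pt_lim_plus _ _ _ _ _
      (derivable_pt_lim_mult _ _ _ _ _ Ha1 Hb2) (derivable_pt_lim_mult _ _ _ _ _ Ha2 Hb1)).
    ring.
Qed.

Lemma cd_const c t : cd (fun _ => c) t C0.
Proof. split; apply derivable_pt_lim_const. Qed.

Lemma cd_csum n F d t : (forall k, (k < n)%nat -> cd (F k) t (d k)) ->
  cd (fun s => csum n (fun k => F k s)) t (csum n d).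
Proof.
  induction n; intros H; simpl.
  - apply cd_const.
  - apply cd_plus; auto.
Qed.

Lemma cd_ext f g t d : (forall s, f s = g s) -> cd f t d -> cd g t d.
Proof. intros H Hd. replace g with f; auto. apply functional_extensionality; auto. Qed.

Lemma cd_unique f t a b : cd f t a -> cd f t b -> a = b.
Proof.
  intros [H1 H2] [H3 H4]. destruct a, b.
  pose proof (uniqueness_limite _ _ _ _ H1 H3). pose proof (uniqueness_limite _ _ _ _ H2 H4).
  unfold Re, Im in *; simpl in *; subst; auto.
Qed.

Definition md n (f : R -> Mat) t (D : Mat) : Prop :=
  forall i j, (i < n)%nat -> (j < n)%nat -> cd (fun s => f s i j) t (D i j).

Lemma md_of n f t D : mat_has_deriv n f t D -> md n f t D.
Proof. intros H i j Hi Hj. destruct (H i j Hi Hj); split; auto. Qed.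

Lemma md_mmul n A B t DA DB : md n A t DA -> md n B t DB ->
  md n (fun s => mmul n (A s) (B s)) t (madd (mmul n DA (B t)) (mmul n (A t) DB)).
Proof.
  intros HA HB i j Hi Hj. unfold madd, mmul. rewrite <- csum_plus.
  apply cd_csum. intros k Hk. apply cd_mult; auto.
Qed.

Lemma md_ext n f g t D : (forall s, meq n (f s) (g s)) -> md n f t D -> md n g t D.
Proof. intros H Hd i j Hi Hj. eapply cd_ext; [|apply Hd; auto]. intros; apply H; auto. Qed.

Lemma md_unique n f t D1 D2 : md n f t D1 -> md n f t D2 -> meq n D1 D2.
Proof. intros H1 H2 i j Hi Hj. eapply cd_unique; eauto. Qed.

Lemma cd_trace n f t D : md n f t D -> cd (fun s => trace n (f s)) t (trace n D).
Proof. intros H. unfold trace. apply cd_csum. intros; apply H; auto. Qed.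

Lemma Cmult_eq0 x y : Cmult x y = C0 -> x = C0 \/ y = C0.
Proof.
  destruct x as [a b], y as [c d]; unfold Cmult, C0, Re, Im; simpl. intros Hx.
  injection Hx as H1 H2.
  destruct (Req_dec (a*a+b*b) 0) as [Hz|Hz].
  - left. assert (Ha: a*a = 0) by (pose proof (Rle_0_sqr a); pose proof (Rle_0_sqr b); unfold Rsqr in *; lra).
    assert (Hb: b*b = 0) by lra.
    apply Rmult_integral in Ha; apply Rmult_integral in Hb.
    assert (a = 0) by (destruct Ha; auto). assert (b = 0) by (destruct Hb; auto). subst; auto.
  - right. assert ((a*a+b*b)*c = 0) by (transitivity (a*(a*c-b*d)+b*(a*d+b*c)); [ring| rewrite H1, H2; ring]). assert ((a*a+b*b)*d = 0) by (transitivity (a*(a*d+b*c)-b*(a*c-b*d)); [ring| rewrite H1, H2; ring]).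
    apply Rmult_integral in H. apply Rmult_integral in H0.
    destruct H, H0; try contradiction. subst; auto.
Qed.

Lemma Cconj_nz x : x <> C0 -> Cconj x <> C0.
Proof. destruct x as [a b]; unfold Cconj, C0, Re, Im; simpl. intros H E; apply H. injection E as -> E. f_equal; lra. Qed.

Lemma Cmult_cancel x s : x <> C0 -> Cmult x s = x -> s = C1.
Proof.
  intros Hx H. assert (Cmult x (Cminus s C1) = C0) by (transitivity (Cminus (Cmult x s) x); [ring| rewrite H; unfold Cminus, Cplus, Copp, C0, Re, Im; simpl; f_equal; ring]).
  apply Cmult_eq0 in H0. destruct H0 as [|H0]; [contradiction|].
  transitivity (Cplus (Cminus s C1) C1); [ring|]. rewrite H0. unfold Cplus, C0, C1, Re, Im; simpl; f_equal; ring.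
Qed.

Lemma Cmult_comm' a b : Cmult a b = Cmult b a.
Proof. ring. Qed.
Lemma Cmult_assoc' a b c : Cmult (Cmult a b) c = Cmult a (Cmult b c).
Proof. ring. Qed.

Lemma trace_one n P : rank_one n P -> meq n (mmul n P P) P -> trace n P = C1.
Proof.
  intros [u [w [[i [Hi Hu]] [[k [Hk Hw]] HP]]]] HPP.
  rewrite HP in HPP. rewrite HP.
  assert (E : trace n (fun i j => Cmult (u i) (Cconj (w j))) = csum n (fun l => Cmult (Cconj (w l)) (u l))).
  { unfold trace. apply csum_ext; intros. apply Cmult_comm'. }
  rewrite E. apply (Cmult_cancel (Cmult (u i) (Cconj (w k)))).
  - intro Z. apply Cmult_eq0 in Z. destruct Z as [Z|Z]; [contradiction|]. apply (Cconj_nz _ Hw Z).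
  - specialize (HPP i k Hi Hk). etransitivity; [|exact HPP]. unfold mmul. rewrite csum_mult_l.
    apply csum_ext; intros; cbv beta. ring.
Qed.

Definition orth n (p : nat -> Mat) := forall i k, (i < n)%nat -> (k < n)%nat ->
  meq n (mmul n (p i) (p k)) (if Nat.eqb i k then p i else mzero).

Definition rsum n (p : nat -> Mat) (lamv : nat -> R) := msum n (fun k => mscale (RtoC (lamv k)) (p k)).

Lemma flag_left n p lamv j : (j < n)%nat -> orth n p ->
  meq n (mmul n (p j) (rsum n p lamv)) (mscale (RtoC (lamv j)) (p j)).
Proof.
  intros Hj Ho. unfold rsum. rewrite mmul_msum_r.
  transitivity (msum n (fun k => mscale (RtoC (lamv k)) (if Nat.eqb j k then p j else mzero))).
  - apply msum_ext; intros k Hk. rewrite mmul_mscale_r, (Ho j k Hj Hk). reflexivity.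
  - intros a b Ha Hb. unfold msum, mscale.
    transitivity (csum n (fun k => if Nat.eqb j k then Cmult (RtoC (lamv k)) (p j a b) else C0)).
    + apply csum_ext; intros. destruct (Nat.eqb j k); unfold mzero; ring.
    + rewrite csum_if, csum_zero by auto. ring.
Qed.

Lemma flag_right n p lamv j : (j < n)%nat -> orth n p ->
  meq n (mmul n (rsum n p lamv) (p j)) (mscale (RtoC (lamv j)) (p j)).
Proof.
  intros Hj Ho. unfold rsum. rewrite mmul_msum_l.
  transitivity (msum n (fun k => mscale (RtoC (lamv k)) (if Nat.eqb k j then p k else mzero))).
  - apply msum_ext; intros k Hk. rewrite mmul_mscale_l, (Ho k j Hk Hj). reflexivity.
  - intros a b Ha Hb. unfold msum, mscale.
    transitivity (csum n (fun k => if Nat.eqb j k then Cmult (RtoC (lamv k)) (p k a b) else C0)).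
    + apply csum_ext; intros. destruct (Nat.eqb_spec k j), (Nat.eqb_spec j k); subst; try lia; unfold mzero; ring.
    + rewrite csum_if, csum_zero by auto. ring.
Qed.

Definition Tk n L (pa pb : Mat) := trace n (mmul n (mmul n (mmul n pa L) pb) (adj L)).

Lemma Chalf x : Cmult (RtoC (/2)) (Cplus x x) = x.
Proof. destruct x; unfold Cmult, Cplus, RtoC, Re, Im; simpl; f_equal; field. Qed.

Lemma diss_term n p lamv j L rho : (j < n)%nat -> orth n p -> meq n (msum n p) idm ->
  meq n rho (rsum n p lamv) ->
  trace n (mmul n (p j) (msub (mmul n (mmul n L rho) (adj L))
     (mscale (RtoC (/2)) (madd (mmul n (mmul n (adj L) L) rho) (mmul n rho (mmul n (adj L) L))))))
  = Cminus (csum n (fun m => Cmult (RtoC (lamv m)) (Tk n L (p j) (p m))))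
           (Cmult (RtoC (lamv j)) (csum n (fun l => Tk n L (p l) (p j)))).
Proof.
  intros Hj Ho Hid Hr. rewrite Hr.
  rewrite mmul_msub_r, trace_msub, mmul_mscale_r, trace_mscale, mmul_madd_r, trace_madd.
  assert (HS : trace n (mmul n (p j) (mmul n (adj L) L)) = csum n (fun l => Tk n L (p l) (p j))).
  { rewrite <- (mmul_idm_l n L) at 2. rewrite <- Hid.
    rewrite mmul_msum_l, mmul_msum_r, mmul_msum_r, trace_msum.
    apply csum_ext; intros l Hl. unfold Tk.
    rewrite (trace_cyc n (p j)), (trace_cyc n (mmul n (mmul n (p l) L) (p j))).
    rewrite !mmul_assoc. reflexivity. }
  assert (H2 : trace n (mmul n (p j) (mmul n (mmul n (adj L) L) (rsum n p lamv)))
     = Cmult (RtoC (lamv j)) (trace n (mmul n (p j) (mmul n (adj L) L)))).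
  { rewrite <- mmul_assoc, trace_cyc, <- mmul_assoc, flag_right by auto.
    rewrite mmul_mscale_l, trace_mscale. reflexivity. }
  assert (H3 : trace n (mmul n (p j) (mmul n (rsum n p lamv) (mmul n (adj L) L)))
     = Cmult (RtoC (lamv j)) (trace n (mmul n (p j) (mmul n (adj L) L)))).
  { rewrite <- mmul_assoc, flag_left by auto.
    rewrite mmul_mscale_l, trace_mscale. reflexivity. }
  assert (H1 : trace n (mmul n (p j) (mmul n (mmul n L (rsum n p lamv)) (adj L)))
     = csum n (fun m => Cmult (RtoC (lamv m)) (Tk n L (p j) (p m)))).
  { unfold rsum. rewrite mmul_msum_r, mmul_msum_l, mmul_msum_r, trace_msum.
    apply csum_ext; intros m Hm. unfold Tk.
    rewrite mmul_mscale_r, mmul_mscale_l, mmul_mscale_r, trace_mscale.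
    rewrite !mmul_assoc. reflexivity. }
  rewrite H1, H2, H3, HS, Chalf. reflexivity.
Qed.

Lemma csum_minus n f g : csum n (fun k => Cminus (f k) (g k)) = Cminus (csum n f) (csum n g).
Proof. unfold Cminus. rewrite csum_plus, csum_opp. reflexivity. Qed.

Theorem mainTheorem2 :
  forall (n N : nat) (Ls : nat -> Mat) (H : R -> Mat) (rho : R -> Mat)
         (lam : nat -> R -> R) (pi : nat -> R -> Mat),
    (forall t, hermitian n (H t)) ->
    (forall t, mat_has_deriv n rho t (lindblad_rhs n (H t) N Ls (rho t))) ->
    (forall j, (j < n)%nat -> derivable (lam j)) ->
    (forall t, complete_flag n (fun j => pi j t)) ->
    (forall j t, (j < n)%nat -> mat_derivable n (pi j) t) ->
    (forall t, meq n (rho t) (msum n (fun j => mscale (RtoC (lam j t)) (pi j t)))) ->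
    forall t j, (j < n)%nat ->
      let X := csum n (fun k => Cmult (Omega n N Ls (fun l => pi l t) j k)
                                      (RtoC (lam k t))) in
      derivable_pt_lim (lam j) t (Re X) /\ Im X = 0.
Proof.
  intros n N Ls H rho lam pi HH Hrho Hlam Hflag Hpi Hdec t j Hj X.
  assert (Horth : forall s, orth n (fun l => pi l s)).
  { intros s. destruct (Hflag s) as [_ [Ho _]]. exact Ho. }
  assert (Hidem : forall s, meq n (mmul n (pi j s) (pi j s)) (pi j s)).
  { intros s. pose proof (Horth s j j Hj Hj) as E. cbv beta in E. rewrite Nat.eqb_refl in E. exact E. }
  assert (Htr1 : forall s, trace n (pi j s) = C1).
  { intros s. apply trace_one; [|apply Hidem]. destruct (Hflag s) as [Hr _]. apply (Hr j Hj). }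
  assert (HA : forall s, trace n (mmul n (pi j s) (rho s)) = RtoC (lam j s)).
  { intros s. rewrite (Hdec s). 
    rewrite (flag_left n (fun l => pi l s) (fun l => lam l s) j Hj (Horth s)).
    rewrite trace_mscale, Htr1. unfold Cmult, RtoC, C1, Re, Im; simpl; f_equal; ring. }
  destruct (Hpi j t Hj) as [D HD]. apply md_of in HD.
  pose proof (md_of _ _ _ _ (Hrho t)) as HDrho.
  set (Rp := lindblad_rhs n (H t) N Ls (rho t)) in *.
  set (P := pi j t) in *.
  set (r := rho t) in *.
  set (lt := RtoC (lam j t)).
  pose proof (cd_trace _ _ _ _ (md_mmul _ _ _ _ _ _ HD HDrho)) as Hcd.
  cbv beta in Hcd. fold P r in Hcd.
  assert (HDrel : meq n D (madd (mmul n D P) (mmul n P D))).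
  { symmetry. eapply md_unique; [|exact HD].
    eapply md_ext; [|exact (md_mmul _ _ _ _ _ _ HD HD)]. intros s; cbv beta. apply Hidem. }
  assert (HPr : meq n (mmul n P r) (mscale lt P)).
  { unfold r; rewrite (Hdec t). apply (flag_left n (fun l => pi l t) (fun l => lam l t) j Hj (Horth t)). }
  assert (HrP : meq n (mmul n r P) (mscale lt P)).
  { unfold r; rewrite (Hdec t). apply (flag_right n (fun l => pi l t) (fun l => lam l t) j Hj (Horth t)). }
  assert (HPP : meq n (mmul n P P) P) by apply Hidem.
  assert (HDP : trace n (mmul n D P) = C0).
  { assert (E1 : trace n (mmul n D P) = trace n (mmul n (madd (mmul n D P) (mmul n P D)) P))
      by (rewrite <- HDrel; reflexivity).
    rewrite mmul_madd_l, trace_madd, mmul_assoc, HPP in E1.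
    rewrite (trace_cyc n (mmul n P D) P), <- mmul_assoc, HPP, (trace_cyc n P D) in E1.
    transitivity (Cminus (Cplus (trace n (mmul n D P)) (trace n (mmul n D P))) (trace n (mmul n D P))); [ring|].
    rewrite <- E1. unfold Cminus, Cplus, Copp, C0, Re, Im; simpl; f_equal; ring. }
  assert (HC : trace n (mmul n D r) = C0).
  { assert (E1 : trace n (mmul n D r) = trace n (mmul n (madd (mmul n D P) (mmul n P D)) r))
      by (rewrite <- HDrel; reflexivity).
    rewrite E1, mmul_madd_l, trace_madd, mmul_assoc, HPr, mmul_mscale_r, trace_mscale, HDP.
    rewrite mmul_assoc, trace_cyc, mmul_assoc, HrP, mmul_mscale_r, trace_mscale, HDP. ring. }
  assert (HX : trace n (mmul n P Rp) = X).
  { unfold Rp, lindblad_rhs. set (A := mscale (Copp Ci) (H t)).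
    rewrite mmul_madd_r, trace_madd, mmul_msub_r, trace_msub.
    assert (Ec : Cminus (trace n (mmul n P (mmul n A r))) (trace n (mmul n P (mmul n r A))) = C0).
    { rewrite <- mmul_assoc, trace_cyc, <- mmul_assoc, HrP, mmul_mscale_l, trace_mscale.
      rewrite <- mmul_assoc, HPr, mmul_mscale_l, trace_mscale. ring. }
    rewrite Ec. unfold dissipator. rewrite mmul_msum_r, trace_msum.
    rewrite (csum_ext N _ (fun k => Cminus (csum n (fun m => Cmult (RtoC (lam m t)) (Tk n (Ls k) P (pi m t))))
           (Cmult lt (csum n (fun l => Tk n (Ls k) (pi l t) P))))).
    2:{ intros k Hk. apply (diss_term n (fun l => pi l t) (fun l => lam l t) j (Ls k) r Hj (Horth t)).
        - destruct (Hflag t) as [_ [_ Hs]]. exact Hs.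
        - apply Hdec. }
    rewrite csum_minus, csum_swap, <- csum_mult_l, csum_swap.
    unfold X, Omega.
    rewrite (csum_ext n _ (fun m => if Nat.eqb j m then
         Cmult (Copp (csum n (fun l => if Nat.eqb j l then C0 else wpi n N Ls (fun l0 => pi l0 t) l j))) (RtoC (lam m t))
         else Cmult (wpi n N Ls (fun l0 => pi l0 t) j m) (RtoC (lam m t)))).
    2:{ intros m Hm. destruct (Nat.eqb_spec j m) as [<-|]; [|reflexivity]. f_equal. f_equal. apply csum_ext.
        intros l Hl. rewrite Nat.eqb_sym. reflexivity. }
    rewrite csum_if by auto. rewrite csum_if by auto.
    unfold wpi. fold lt P.
    rewrite (csum_ext n (fun m => Cmult (csum N (fun k => trace n (mmul n (mmul n (mmul n P (Ls k)) (pi m t)) (adj (Ls k))))) (RtoC (lam m t)))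
       (fun m => csum N (fun k => Cmult (RtoC (lam m t)) (Tk n (Ls k) P (pi m t))))).
    2:{ intros m Hm. rewrite csum_mult_r. apply csum_ext; intros. unfold Tk. ring. }
    unfold Tk. rewrite !(csum_swap N n). ring. }
  set (Y := trace n (madd (mmul n D r) (mmul n P Rp))) in Hcd.
  assert (HY : Y = X) by (unfold Y; rewrite trace_madd, HC, HX; ring).
  rewrite <- HY.
  apply (cd_ext _ (fun s => RtoC (lam j s))) in Hcd; [|exact HA].
  destruct Hcd as [Hc1 Hc2]. split.
  - exact Hc1.
  - eapply uniqueness_limite; [exact Hc2|]. apply derivable_pt_lim_const.
Qed.
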